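(* Let $0<r'<r<1$. There exists $f_{r'}\in\mathbb{Z}((T))_{>r}$ such that for every extremally disconnected set $S$, the kernel of the ring homomorphism $\theta_{r'}:\mathbb{Z}((T))_r(S)\to C(S,\mathbb{R})$, $\sum a_nT^n\mapsto\big(s\mapsto\sum a_n(s)(r')^n\big)$, is the ideal $f_{r'}\cdot\mathbb{Z}((T))_r(S)$ (where $f_{r'}$ is regarded as an element of $\mathbb{Z}((T))_r(S)$ with constant coefficient functions).
   Context: Extremally disconnected sets are the projective objects in the category of compact Hausdorff spaces. For $0<r<1$ and extremally disconnected $S$, $\mathbb{Z}((T))_r(S)$ is the ring of formal sums $\sum_{n\ge k}a_nT^n$ (some $k\in\mathbb{Z}$) with $a_n\in C(S,\mathbb{Z})$ such that there is $c>0$ with $\sum_n|a_n(s)|r^n\le c$ for all $s\in S$. $\mathbb{Z}((T))_{>r}$ is the ring of integer Laurent series $\sum_{n\gg-\infty}a_nT^n$ such that $|a_n|(r'')^n\to 0$ for some $r''>r$. *)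

(* Defs.v *)
From HB Require Import structures.
From mathcomp Require Import all_boot all_order all_algebra.
From mathcomp Require Import all_classical all_reals all_analysis.
Set Implicit Arguments. Unset Strict Implicit. Unset Printing Implicit Defensive.
Import Order.TTheory GRing.Theory Num.Theory.
Import numFieldNormedType.Exports.
Local Open Scope classical_set_scope.
Local Open Scope ring_scope.

Definition extremally_disconnected (S : topologicalType) : Prop :=
  forall U : set S, open U -> open (closure U).

(* continuity of a : S -> Z for the discrete topology on Z *)
Definition locally_constant (S : topologicalType) (a : S -> int) : Prop :=
  forall s : S, \forall t \near s, a t = a s.

(* Z((T))_r(S): coefficient families a : int -> C(S,Z), vanishing below some
   k, with sum_n |a_n(s)| r^n bounded uniformly in s (partial sums bounded,
   the terms being nonnegative). *)
Definition ZLr (R : realType) (r : R) (S : topologicalType)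
    (a : int -> S -> int) : Prop :=
  (forall n, locally_constant (a n)) /\
  exists k : int, (forall n s, n < k -> a n s = 0) /\
    exists c : R, forall (s : S) (N : nat),
      \sum_(i < N) ((`|a (k + i%:Z) s|)%:~R * r ^ (k + i%:Z)) <= c.

Definition ZLgt (R : realType) (r : R) (f : int -> int) : Prop :=
  (exists k : int, forall n, n < k -> f n = 0) /\
  exists r2 : R, r < r2 /\
    (fun i : nat => (`|f i%:Z|)%:~R * r2 ^ i%:Z) @ \oo --> (0 : R).

(* theta_{r'}(a)(s) = sum_n a_n(s) r'^n (symmetric partial sums; the
   coefficients vanish for n << 0) *)
Definition theta (R : realType) (r' : R) (S : topologicalType)
    (a : int -> S -> int) (s : S) : R :=
  lim ((fun N : nat => \sum_(i < (2 * N).+1)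
          ((a (i%:Z - N%:Z) s)%:~R * r' ^ (i%:Z - N%:Z))) @ \oo).

(* g = f * h (Cauchy product of Laurent series, f with constant integer
   coefficients):  g_n(s) = sum_{kf <= i <= n - kh} f_i h_{n-i}(s) *)
Definition is_laurent_prod (S : topologicalType) (f : int -> int)
    (h g : int -> S -> int) : Prop :=
  exists kf kh : int,
    (forall n, n < kf -> f n = 0) /\ (forall n s, n < kh -> h n s = 0) /\
    forall n s, g n s =
      if n < kf + kh then 0
      else \sum_(j < (absz (n - (kf + kh))%R).+1) f (kf + j%:Z) * h (n - kf - j%:Z) s.

(* Main.v *)
Require Import Defs.
From HB Require Import structures.
From mathcomp Require Import all_boot all_order all_algebra.
From mathcomp Require Import all_classical all_reals all_analysis.
From mathcomp Require Import zify ring lra.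
Import Order.TTheory GRing.Theory Num.Theory.
Import numFieldNormedType.Exports.
Local Open Scope classical_set_scope.
Local Open Scope ring_scope.
Section Ops.
Variable R : realType.
Implicit Types (a b : nat -> R) (c : R).

Definition Mop c (j : nat) a : nat -> R :=
  fun m => a m + (if (j <= m)%N then c * a (m - j)%N else 0).
Definition Dop c (j : nat) a : nat -> R :=
  fun m => \sum_(t < (m %/ j).+1) (- c) ^+ t * a (m - t * j)%N.

Lemma divn_sub m j : (0 < j)%N -> (j <= m)%N -> (m %/ j = ((m - j) %/ j).+1)%N.
Proof.
move=> j0 jm; rewrite -{1}(subnK jm) divnDr ?dvdnn // divnn j0 addn1 //.
Qed.

Lemma MDop c j a : (0 < j)%N -> Mop c j (Dop c j a) = a.
Proof.
move=> j0; apply: funext => m; rewrite /Mop /Dop.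
case: leqP => jm; last first.
  by rewrite divn_small // big_ord1 expr0 mul1r mul0n subn0 addr0.
rewrite divn_sub // big_ord_recl /= expr0 mul1r mul0n subn0 -addrA.
rewrite mulr_sumr -big_split /= big1 ?addr0 // => i _.
by rewrite exprS mulSn subnDA !mulNr -mulrA addNr.
Qed.
Lemma Mop_inj c j a b : (0 < j)%N -> Mop c j a = Mop c j b -> a = b.
Proof.
move=> j0 e; apply: funext => m; elim/ltn_ind: m => m IH.
have := congr1 (fun f => f m) e; rewrite /Mop; case: leqP => jm.
  have h : (m - j < m)%N by lia.
  by rewrite (IH _ h) => /addIr.
by rewrite !addr0.
Qed.

Lemma Mop_comm c j c' j' a : Mop c j (Mop c' j' a) = Mop c' j' (Mop c j a).
Proof.
apply: funext => m; rewrite /Mop.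
case: (leqP j m) => jm; case: (leqP j' m) => j'm.
- have -> : (j' <= m - j)%N = (j + j' <= m)%N by apply/idP/idP => ?; lia.
  have -> : (j <= m - j')%N = (j + j' <= m)%N by apply/idP/idP => ?; lia.
  rewrite subnAC; case: (j + j' <= m)%N; ring.
- have -> : (j' <= m - j)%N = false by apply/negbTE; rewrite -ltnNge; lia.
  ring.
- have -> : (j <= m - j')%N = false by apply/negbTE; rewrite -ltnNge; lia.
  ring.
- ring.
Qed.

Lemma Mop_Dop c j c' j' a : (0 < j)%N ->
  Mop c' j' (Dop c j a) = Dop c j (Mop c' j' a).
Proof.
move=> j0; apply: (@Mop_inj c j) => //.
by rewrite MDop // Mop_comm MDop.
Qed.

Definition agree (n : nat) a b := forall m, (m <= n)%N -> a m = b m.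

Lemma agree_Mop n c j a b : agree n a b -> agree n (Mop c j a) (Mop c j b).
Proof.
move=> e m mn; rewrite /Mop e //; case: ifP => // _.
by rewrite e // (leq_trans (leq_subr _ _) mn).
Qed.

Lemma agree_Dop n c j a b : agree n a b -> agree n (Dop c j a) (Dop c j b).
Proof.
move=> e m mn; rewrite /Dop; apply: eq_bigr => t _.
by rewrite e // (leq_trans (leq_subr _ _) mn).
Qed.

Lemma Mop_small c j a m : (m < j)%N -> Mop c j a m = a m.
Proof. by rewrite /Mop ltnNge => /negbTE ->; rewrite addr0. Qed.

Lemma Dop_small c j a m : (m < j)%N -> Dop c j a m = a m.
Proof.
by move=> mj; rewrite /Dop divn_small // big_ord1 expr0 mul1r mul0n subn0.
Qed.

Definition cprod a b : nat -> R := fun m => \sum_(i < m.+1) a i * b (m - i)%N.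

Definition delta : nat -> R := fun m => if m == 0%N then 1 else 0.

Lemma conv_delta b : cprod delta b = b.
Proof.
apply: funext => m; rewrite /cprod big_ord_recl /= /delta /= mul1r subn0.
by rewrite big1 ?addr0 // => i _; rewrite mul0r.
Qed.

Lemma conv_Mop c j a b : cprod (Mop c j a) b = Mop c j (cprod a b).
Proof.
apply: funext => m; rewrite /cprod /Mop.
under eq_bigr do rewrite mulrDl.
rewrite big_split /=; congr (_ + _).
rewrite -(big_mkord xpredT (fun i => (if (j <= i)%N then c * a (i - j)%N else 0) * b (m - i)%N)).
case: leqP => jm.
  rewrite (big_cat_nat _ (n := j)) //= ?(leq_trans jm) //.
  rewrite big_nat big1 ?add0r; last by move=> i /andP[_ ij]; rewrite leqNgt ij mul0r.
  rewrite -{1}(add0n j) big_addn mulr_sumr big_mkord subSn //.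
  apply: eq_bigr => i _; rewrite leq_addl addnK -mulrA.
  by rewrite subnDA subnAC.
rewrite big_nat big1 // => i /andP[_ im]; rewrite ifN ?mul0r //.
by rewrite -ltnNge (leq_trans im).
Qed.
Definition nrm (N : nat) (rho : R) a := \sum_(m < N) `|a m| * rho ^+ m.

Lemma nrm_ge0 N rho a : 0 <= rho -> 0 <= nrm N rho a.
Proof. by move=> r0; apply: sumr_ge0 => i _; rewrite mulr_ge0 ?exprn_ge0. Qed.

Lemma nrm_mono M N rho a : 0 <= rho -> (M <= N)%N -> nrm M rho a <= nrm N rho a.
Proof.
move=> r0 MN; rewrite /nrm (big_ord_widen N (fun m => `|a m| * rho ^+ m) MN).
rewrite [X in _ <= X](bigID (fun i : 'I_N => (i < M)%N)) /= lerDl.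
by apply: sumr_ge0 => i _; rewrite mulr_ge0 ?exprn_ge0.
Qed.

Lemma shift_sum N j rho a : 0 <= rho ->
  \sum_(m < N) (if (j <= m)%N then `|a (m - j)%N| * rho ^+ m else 0)
  <= rho ^+ j * nrm N rho a.
Proof.
move=> r0; rewrite -(big_mkord xpredT (fun m => if (j <= m)%N then `|a (m - j)%N| * rho ^+ m else 0)).
case: (leqP N j) => Nj.
  rewrite big_nat big1; first by rewrite mulr_ge0 ?exprn_ge0 ?nrm_ge0.
  by move=> i /andP[_ iN]; rewrite ifN // -ltnNge (leq_trans iN).
rewrite (big_cat_nat (leq0n j) (ltnW Nj)).
rewrite big_nat big1 ?add0r; last by move=> i /andP[_ ij]; rewrite leqNgt ij.
rewrite -{1}(add0n j) big_addn big_mkord.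
have -> : \sum_(i < N - j) (if (j <= i + j)%N then `|a (i + j - j)%N| * rho ^+ (i + j) else 0)
   = rho ^+ j * nrm (N - j) rho a.
  rewrite /nrm mulr_sumr; apply: eq_bigr => i _.
  by rewrite leq_addl addnK exprD mulrA mulrC.
rewrite Monoid.mul1m.
apply: ler_pM; [exact: exprn_ge0 | exact: nrm_ge0 | exact: lexx | exact: nrm_mono (leq_subr j N)].
Qed.
Lemma nrm_rec N rho c j u v w : 0 <= rho ->
  (forall m, `|u m| <= `|v m| + (if (j <= m)%N then `|c| * `|w (m - j)%N| else 0)) ->
  nrm N rho u <= nrm N rho v + `|c| * rho ^+ j * nrm N rho w.
Proof.
move=> r0 H.
have S1 : nrm N rho u <= \sum_(m < N) (`|v m| * rho ^+ m +
     `|c| * (if (j <= m)%N then `|w (m - j)%N| * rho ^+ m else 0)).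
  apply: ler_sum => m _.
  have := H m; move/(ler_wpM2r (exprn_ge0 m r0)) => h; apply: le_trans h _.
  by rewrite mulrDl; case: ifP => _; rewrite ?mulr0 ?mul0r // mulrA.
rewrite big_split /= -mulr_sumr in S1.
apply: le_trans S1 _; apply: lerD => //.
rewrite -mulrA; apply: ler_wpM2l => //; exact: shift_sum.
Qed.

Lemma nrm_Mop N rho c j a : 0 <= rho ->
  nrm N rho (Mop c j a) <= (1 + `|c| * rho ^+ j) * nrm N rho a.
Proof.
move=> r0; rewrite mulrDl mul1r; apply: nrm_rec => // m.
rewrite /Mop; apply: (le_trans (ler_normD _ _)); apply: lerD => //.
by case: ifP => _; rewrite ?normr0 // normrM.
Qed.

Lemma nrm_Dop N rho c j a : 0 <= rho -> (0 < j)%N -> `|c| * rho ^+ j < 1 ->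
  nrm N rho (Dop c j a) <= nrm N rho a / (1 - `|c| * rho ^+ j).
Proof.
move=> r0 j0 lt1; rewrite ler_pdivlMr ?subr_gt0 //.
have : nrm N rho (Dop c j a) <= nrm N rho a + `|c| * rho ^+ j * nrm N rho (Dop c j a).
  apply: nrm_rec => // m.
  have -> : Dop c j a m = a m - (if (j <= m)%N then c * Dop c j a (m - j)%N else 0).
    by rewrite -{2}(MDop c j a j0) /Mop addrK.
  apply: (le_trans (ler_normB _ _)); apply: lerD => //.
  by case: ifP => _; rewrite ?normr0 // normrM.
by rewrite mulrBr mulr1 lerBlDr mulrC.
Qed.
Lemma tri_sum (f : nat -> nat -> R) N :
  \sum_(m < N) \sum_(i < m.+1) f i (m - i)%N =
  \sum_(i < N) \sum_(k < N - i) f i k.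
Proof.
elim: N => [|N IH]; first by rewrite !big_ord0.
rewrite big_ord_recr /= IH [in RHS]big_ord_recr /= subSnn big_ord1.
rewrite [in RHS](eq_bigr (fun i : 'I_N => \sum_(k < N - i) f i k + f i (N - i)%N)); last first.
  by move=> i _; rewrite subSn ?(ltnW (ltn_ord i)) // big_ord_recr.
rewrite big_split /= -!addrA; congr (_ + _).
by rewrite big_ord_recr /= subnn.
Qed.

Lemma nrm_conv N rho a b : 0 <= rho ->
  nrm N rho (cprod a b) <= nrm N rho a * nrm N rho b.
Proof.
move=> r0.
have S1 : nrm N rho (cprod a b) <= \sum_(m < N) \sum_(i < m.+1)
   ((`|a i| * rho ^+ i) * (`|b (m - i)%N| * rho ^+ (m - i)%N)).
  apply: ler_sum => m _; rewrite /cprod.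
  apply: (le_trans (ler_wpM2r (exprn_ge0 m r0) (ler_norm_sum _ _ _))).
  rewrite mulr_suml; apply: ler_sum => i _.
  rewrite normrM mulrACA -exprD subnKC ?(leq_ord i) //.
apply: le_trans S1 _; rewrite (tri_sum (fun i k => (`|a i| * rho ^+ i) * (`|b k| * rho ^+ k))).
rewrite /nrm mulr_suml; apply: ler_sum => i _; rewrite mulr_sumr.
rewrite (big_ord_widen N (fun k => (`|a i| * rho ^+ i) * (`|b k| * rho ^+ k)) (leq_subr i N)).
rewrite [X in _ <= X](bigID (fun k : 'I_N => (k < N - i)%N)) /= lerDl.
by apply: sumr_ge0 => k _; rewrite !mulr_ge0 ?exprn_ge0.
Qed.
End Ops.
Arguments Mop {R}. Arguments Dop {R}. Arguments cprod {R}. Arguments delta {R}.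
Arguments nrm {R}. Arguments agree {R}.
Section Constr.
Variable R : realType.
Variable x : R.
Implicit Types (a b G : nat -> R).

Definition Me := Mop (- x^-1) 1.
Fixpoint Pn n : nat -> R := match n with
  | 0 => Me (delta)
  | n'.+1 => Mop ((Num.floor (Pn n' n'.+1))%:~R - Pn n' n'.+1) n'.+1 (Pn n') end.
Definition beta n : R := match n with 0 => 0
  | n'.+1 => (Num.floor (Pn n' n))%:~R - Pn n' n end.
Lemma PnS n : Pn n.+1 = Mop (beta n.+1) n.+1 (Pn n). Proof. by []. Qed.
Fixpoint Qn n : nat -> R := match n with 0 => delta
  | n'.+1 => Mop (beta n) n (Qn n') end.
Fixpoint Xop n b : nat -> R := match n with 0 => Me b
  | n'.+1 => Mop (beta n) n (Xop n' b) end.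
Fixpoint An n G : nat -> R := match n with 0 => Dop (- x^-1) 1 G
  | n'.+1 => Dop (beta n) n (An n' G) end.

Lemma Pn_Qn n : Pn n = Me (Qn n).
Proof. by elim: n => [//|n IH]; rewrite PnS IH /Me Mop_comm. Qed.

Lemma conv_Pn n b : cprod (Pn n) b = Xop n b.
Proof.
elim: n => [|n IH]; first by rewrite /= /Me conv_Mop conv_delta.
by rewrite PnS conv_Mop IH.
Qed.

Lemma Xop_Dop n c j a : (0 < j)%N -> Xop n (Dop c j a) = Dop c j (Xop n a).
Proof. by move=> j0; elim: n => [|n IH] /=; rewrite ?IH /Me Mop_Dop. Qed.

Lemma Xop_An n G : Xop n (An n G) = G.
Proof.
elim: n => [|n IH] /=; first exact: MDop.
by rewrite Xop_Dop // IH MDop.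
Qed.

Lemma Pn_stab n k : (k <= n)%N -> Pn n k = Pn k k.
Proof.
elim: n => [|n IH]; first by rewrite leqn0 => /eqP->.
rewrite leq_eqVlt => /orP[/eqP->//|]; rewrite ltnS => kn.
by rewrite PnS Mop_small ?ltnS // IH.
Qed.

Lemma Qn_stab n k : (k <= n)%N -> Qn n k = Qn k k.
Proof.
elim: n => [|n IH]; first by rewrite leqn0 => /eqP->.
rewrite leq_eqVlt => /orP[/eqP->//|]; rewrite ltnS => kn.
by rewrite /= Mop_small ?ltnS // IH.
Qed.

Lemma An_stab G n k : (k <= n)%N -> An n G k = An k G k.
Proof.
elim: n => [|n IH]; first by rewrite leqn0 => /eqP->.
rewrite leq_eqVlt => /orP[/eqP->//|]; rewrite ltnS => kn.
by rewrite /= Dop_small ?ltnS // IH.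
Qed.

Definition Ff m := Pn m m.
Definition Ww m := Qn m m.
Definition Hh G m := An m G m.

Lemma Ff_Me : Ff = Me Ww.
Proof.
apply: funext => m; rewrite /Ff Pn_Qn /Me /Mop /Ww.
by case: m => [//|m]; rewrite subn1 /= (@Mop_small _ _ _ _ _ (ltnSn m)).
Qed.

Lemma conv_FH G m : cprod Ff (Hh G) m = G m.
Proof.
rewrite -{2}(Xop_An m G) -conv_Pn /cprod; apply: eq_bigr => i _.
rewrite /Ff /Hh Pn_stab ?(leq_ord i) // An_stab // leq_subr //.
Qed.

Lemma Pn0 n : Pn n 0 = 1.
Proof.
elim: n => [|n IH]; first by rewrite /= /Me /Mop /delta /= addr0.
by rewrite PnS Mop_small.
Qed.

Lemma Ff0 : Ff 0 = 1.
Proof. exact: Pn0. Qed.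

Lemma Ff_int m : Ff m \is a Num.int.
Proof.
case: m => [|m]; first by rewrite Ff0.
rewrite /Ff PnS /Mop leqnn subnn Pn0 mulr1 addrC subrK.
exact: intr_int.
Qed.

Lemma beta_le1 n : `|beta n| <= 1.
Proof.
case: n => [|n] /=; first by rewrite normr0.
have /andP[h1 h2] := floor_itv (Pn n n.+1).
have h3 : (Num.floor (Pn n n.+1) + 1)%:~R = (Num.floor (Pn n n.+1))%:~R + 1 :> R.
  by rewrite intrD.
rewrite h3 in h2; rewrite ler_norml; apply/andP; split; lra.
Qed.

Lemma Hh_int G : (forall m, G m \is a Num.int) -> forall m, Hh G m \is a Num.int.
Proof.
move=> Gi; elim/ltn_ind => m IH.
have := conv_FH G m; rewrite /cprod big_ord_recl /= subn0 Ff0 mul1r.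
move=> e; have -> : Hh G m = G m - \sum_(i < m) Ff i.+1 * Hh G (m - i.+1)%N.
  by rewrite -e addrK.
rewrite rpredB ?Gi // rpred_sum // => i _; rewrite rpredM ?Ff_int // IH //.
have := ltn_ord i; lia.
Qed.
End Constr.
Arguments Me {R}. Arguments Pn {R}. Arguments beta {R}. Arguments Qn {R}.
Arguments Xop {R}. Arguments An {R}. Arguments Ff {R}. Arguments Ww {R}. Arguments Hh {R}.
Section Bounds.
Variable R : realType.
Implicit Types (a b G : nat -> R).

Definition fac (rho : R) (j : nat) := 1 + rho ^+ j.+1 / (1 - rho).
Definition Kb (rho : R) := expR (((1 - rho) ^+ 2)^-1).

Lemma geo_sum (rho : R) n : (1 - rho) * \sum_(j < n) rho ^+ j = 1 - rho ^+ n.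
Proof.
elim: n => [|n IH]; first by rewrite big_ord0 mulr0 expr0 subrr.
by rewrite big_ord_recr /= mulrDr IH exprS; ring.
Qed.

Lemma prod_fac (rho : R) n : 0 <= rho < 1 -> \prod_(j < n) fac rho j <= Kb rho.
Proof.
move=> /andP[r0 r1].
have r1' : 0 < 1 - rho by rewrite subr_gt0.
have H : forall n, \prod_(j < n) fac rho j <= expR (\sum_(j < n) rho ^+ j.+1 / (1 - rho)).
  elim=> [|k IH]; first by rewrite big_ord0 big_ord0 expR0.
  rewrite big_ord_recr big_ord_recr /= expRD.
  apply: ler_pM => //.
    apply: prodr_ge0 => i _; rewrite /fac addr_ge0 ?divr_ge0 ?exprn_ge0 // ltW //.
    rewrite /fac addr_ge0 ?divr_ge0 ?exprn_ge0 // ltW //.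
  exact: expR_ge1Dx.
apply: (le_trans (H n)); rewrite /Kb ler_expR.
rewrite -mulr_suml expr2 invfM ler_pM2r ?invr_gt0 //.
have : \sum_(j < n) rho ^+ j.+1 <= \sum_(j < n) rho ^+ j.
  by apply: ler_sum => j _; rewrite exprS ler_piMl ?exprn_ge0 // ltW.
move=> /le_trans; apply.
by rewrite -(ler_pM2l r1') geo_sum mulfV ?gt_eqF // lerBlDr lerDl exprn_ge0.
Qed.

Lemma fac_M (rho : R) (c : R) j : 0 <= rho < 1 -> `|c| <= 1 ->
  1 + `|c| * rho ^+ j.+1 <= fac rho j.
Proof.
move=> /andP[r0 r1] c1; rewrite /fac lerD2l.
have r1' : 0 < 1 - rho by rewrite subr_gt0.
have hp : 0 <= rho ^+ j.+1 by rewrite exprn_ge0.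
have h1 : `|c| * rho ^+ j.+1 <= rho ^+ j.+1 by rewrite ler_piMl.
have h2 : rho ^+ j.+1 <= rho ^+ j.+1 / (1 - rho).
  rewrite ler_pdivlMr //; nra.
exact: le_trans h1 h2.
Qed.

Lemma fac_D (rho : R) (c : R) (j : nat) (a : R) : 0 <= rho < 1 -> `|c| <= 1 -> 0 <= a ->
  a / (1 - `|c| * rho ^+ j.+1) <= fac rho j * a.
Proof.
move=> /andP[r0 r1] c1 a0; rewrite /fac.
have r1' : 0 < 1 - rho by rewrite subr_gt0.
set p := rho ^+ j.+1.
have hp : 0 <= p by rewrite exprn_ge0.
have hpr : p <= rho.
  by rewrite /p exprS ler_piMr // exprn_ile1 // ltW.
have h1 : `|c| * p <= p by rewrite ler_piMl.
have h0 : 0 <= `|c| * p by rewrite mulr_ge0.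
set y := `|c| * p in h1 h0 *.
set z := p / (1 - rho).
have hz : z * (1 - rho) = p by rewrite /z divfK ?gt_eqF.
have z0 : 0 <= z by rewrite divr_ge0 // ltW.
have key : 1 <= (1 + z) * (1 - y) by nra.
have y1 : 0 < 1 - y by lra.
rewrite ler_pdivrMr //; nra.
Qed.
End Bounds.
Arguments fac {R}. Arguments Kb {R}.
Section Constr2.
Variable R : realType.
Variable x : R.
Implicit Types (a b G : nat -> R).

Lemma nrm_delta N (rho : R) : nrm N rho delta <= 1.
Proof.
case: N => [|N]; first by rewrite /nrm big_ord0.
rewrite /nrm big_ord_recl big1 ?addr0 /delta /=; first by rewrite normr1 mul1r.
by move=> i _; rewrite normr0 mul0r.
Qed.

Lemma nrm_Qn N n (rho : R) : 0 <= rho < 1 ->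
  nrm N rho (Qn x n) <= \prod_(j < n) fac rho j.
Proof.
move=> /[dup] rr /andP[r0 r1]; elim: n => [|n IH].
  by rewrite big_ord0; exact: nrm_delta.
rewrite /= big_ord_recr /= mulrC.
apply: (le_trans (nrm_Mop _ _ _ _ _ _ r0)).
apply: ler_pM => //; first by rewrite addr_ge0 ?mulr_ge0 ?exprn_ge0.
  exact: nrm_ge0.
exact: (@fac_M R rho _ n rr (beta_le1 R x n.+1)).
Qed.

Lemma nrm_An N n (rho : R) G : 0 <= rho < 1 ->
  nrm N rho (An x n G) <= \prod_(j < n) fac rho j * nrm N rho (Dop (- x^-1) 1 G).
Proof.
move=> /[dup] rr /andP[r0 r1]; elim: n => [|n IH].
  by rewrite big_ord0 mul1r.
rewrite /= big_ord_recr /= (mulrC _ (fac rho n)) -mulrA.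
have lt1 : `|beta x n.+1| * rho ^+ n.+1 < 1.
  apply: (le_lt_trans (ler_piMl (exprn_ge0 _ r0) (beta_le1 R x n.+1))).
  by rewrite exprn_ilt1.
apply: (le_trans (nrm_Dop _ _ _ _ _ _ r0 (ltn0Sn n) lt1)).
apply: (le_trans (fac_D _ _ _ _ _ rr (beta_le1 R x n.+1) (nrm_ge0 _ _ _ _ r0))).
apply: ler_wpM2l => //; rewrite /fac addr_ge0 ?divr_ge0 ?exprn_ge0 // subr_ge0 ltW //.
Qed.
End Constr2.
Section Anal.
Variable R : realType.
Implicit Types (v : nat -> R).

Lemma series_ord v n : series v n = \sum_(i < n) v i.
Proof. by rewrite seriesEord. Qed.

Lemma bnd_cvg v (B : R) : (forall L, \sum_(i < L) `|v i| <= B) -> cvgn (series v).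
Proof.
move=> HB; apply: normed_cvg; apply: nondecreasing_is_cvgn.
  by apply: (@nondecreasing_series R (fun k => `|v k|) xpredT 0) => n _ _.
exists B => _ [n _ <-]; apply: le_trans (HB n); change (series (fun k => `|v k|) n <= \sum_(i < n) `|v i|); by rewrite seriesEord.
Qed.

Lemma bnd_to0 v (B : R) : (forall L, \sum_(i < L) `|v i| <= B) -> v @ \oo --> 0.
Proof. by move=> /bnd_cvg /cvg_series_cvg_0. Qed.



End Anal.
Section DeBound.
Variable R : realType.
Variables x r : R.
Hypothesis x0 : 0 < x.
Hypothesis xr : x < r.
Implicit Types (G : nat -> R).

Lemma De_formula G m : Dop (- x^-1) 1 G m * x ^+ m = \sum_(i < m.+1) G i * x ^+ i.
Proof.
rewrite /Dop divn1 opprK mulr_suml [RHS](reindex_inj rev_ord_inj) /=.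
apply: eq_bigr => t _.
rewrite muln1 subSS.
have tm : (t <= m)%N by rewrite -ltnS.
have -> : x ^+ m = x ^+ (m - t) * x ^+ t by rewrite -exprD subnK.
have xt : x ^+ t != 0 by rewrite expf_neq0 // gt_eqF.
by rewrite exprVn [x ^+ (m - t) * _]mulrC mulrA [_ * x ^+ t]mulrC mulrA mulfV // mul1r.
Qed.

Lemma geo_cond (q : R) N i :
  (q - 1) * \sum_(m < N) (if (m < i)%N then q ^+ m else 0) = q ^+ (minn N i) - 1.
Proof.
elim: N => [|N IH]; first by rewrite big_ord0 mulr0 min0n expr0 subrr.
rewrite big_ord_recr /= mulrDr IH.
case: (ltnP N i) => Ni.
  have -> : minn N.+1 i = N.+1 by lia.
  by rewrite exprS; ring.
have -> : minn N.+1 i = i by lia.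
by rewrite mulr0 addr0.
Qed.

Lemma De_bound G B : (forall M, nrm M r G <= B) ->
  (fun M => \sum_(i < M) G i * x ^+ i) @ \oo --> 0 ->
  forall N, nrm N r (Dop (- x^-1) 1 G) <= x / (r - x) * B.
Proof.
move=> HB HS N.
set D := Dop (- x^-1) 1 G.
set S := fun M => \sum_(i < M) G i * x ^+ i.
set q := r / x.
have x0' : 0 <= x := ltW x0.
have q1 : 1 < q by rewrite /q ltr_pdivlMr // mul1r.
have q0 : 0 <= q by rewrite ltW // (lt_trans _ q1).
have rq : forall m, r ^+ m = x ^+ m * q ^+ m.
  by move=> m; rewrite -exprMn /q mulrC divfK ?gt_eqF.
set C := \sum_(m < N) q ^+ m.
have C0 : 0 <= C by apply: sumr_ge0 => m _; rewrite exprn_ge0.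
have B0 : 0 <= B by apply: le_trans (HB 0%N); rewrite /nrm big_ord0.
have rx : 0 < r - x by rewrite subr_gt0.
have inner : forall i, \sum_(m < N) (if (m < i)%N then q ^+ m else 0) <= q ^+ i / (q - 1).
  move=> i; rewrite ler_pdivlMr ?subr_gt0 // mulrC geo_cond.
  rewrite lerBlDr (le_trans (ler_weXn2l (ltW q1) (geq_minr N i))) // lerDl //.
have qx : (q - 1)^-1 = x / (r - x).
  by rewrite /q -[1](@mulfV _ x) ?gt_eqF // -mulrBl invfM invrK mulrC.
have step : forall M, (N <= M)%N -> nrm N r D <= `|S M| * C + x / (r - x) * B.
  move=> M NM.
  have t1 : forall m, (m < N)%N -> `|D m| * r ^+ m <=
      (`|S M| + \sum_(i < M | ~~ (i < m.+1)%N) `|G i| * x ^+ i) * q ^+ m.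
    move=> m mN.
    have e1 : `|D m| * r ^+ m = `|S m.+1| * q ^+ m.
      rewrite rq mulrA; congr (_ * _).
      by rewrite -(ger0_norm (exprn_ge0 m x0')) -normrM /D De_formula.
    rewrite e1 ler_wpM2r ?exprn_ge0 //.
    have e2 : S M = S m.+1 + \sum_(i < M | ~~ (i < m.+1)%N) G i * x ^+ i.
      rewrite /S (bigID (fun i : 'I_M => (i < m.+1)%N)) /=; congr (_ + _).
      by rewrite (big_ord_widen M (fun i => G i * x ^+ i) (leq_trans mN NM)).
    have -> : S m.+1 = S M - \sum_(i < M | ~~ (i < m.+1)%N) G i * x ^+ i.
      by rewrite e2 addrK.
    apply: (le_trans (ler_normB _ _)); apply: lerD => //.
    apply: (le_trans (ler_norm_sum _ _ _)); apply: ler_sum => i _.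
    by rewrite normrM (ger0_norm (exprn_ge0 i x0')).
  have t2 : nrm N r D <= \sum_(m < N)
      (`|S M| + \sum_(i < M | ~~ (i < m.+1)%N) `|G i| * x ^+ i) * q ^+ m.
    by apply: ler_sum => m _; apply: t1.
  apply: (le_trans t2).
  under eq_bigr do rewrite mulrDl.
  rewrite big_split /= -mulr_sumr lerD2l.
  have e3 : \sum_(m < N) (\sum_(i < M | ~~ (i < m.+1)%N) `|G i| * x ^+ i) * q ^+ m
      = \sum_(i < M) (`|G i| * x ^+ i) *
          \sum_(m < N) (if (m < i)%N then q ^+ m else 0).
    rewrite (eq_bigr (fun m : 'I_N => \sum_(i < M)
        (if (m < i)%N then (`|G i| * x ^+ i) * q ^+ m else 0))); last first.
      move=> m _; rewrite big_mkcond mulr_suml; apply: eq_bigr => i _.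
      by rewrite ltnS -ltnNge; case: ifP => _; rewrite ?mul0r.
    rewrite exchange_big /=; apply: eq_bigr => i _; rewrite mulr_sumr.
    by apply: eq_bigr => m _; case: ifP => _; rewrite ?mulr0.
  rewrite e3.
  apply: (@le_trans _ _ (\sum_(i < M) (`|G i| * x ^+ i) * (q ^+ i / (q - 1)))).
    apply: ler_sum => i _; apply: ler_wpM2l; first by rewrite mulr_ge0 ?exprn_ge0.
    exact: inner.
  rewrite qx.
  have -> : \sum_(i < M) (`|G i| * x ^+ i) * (q ^+ i * (x / (r - x)))
      = x / (r - x) * nrm M r G.
    by rewrite /nrm mulr_sumr; apply: eq_bigr => i _; rewrite rq; ring.
  by apply: ler_wpM2l => //; rewrite divr_ge0 // ltW.
apply/ler_addgt0Pr => e e0.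
have e1 : 0 < e / (C + 1) by rewrite divr_gt0 // ltr_wpDl.
case: (cvgr0_norm_lt S HS _ e1) => n0 _ Hn0.
have hM := Hn0 (maxn N n0) (leq_maxr N n0); rewrite /= in hM.
apply: (le_trans (step _ (leq_maxl N n0))).
rewrite addrC lerD2l.
set y := e / (C + 1) in e1 hM.
have hy : y * (C + 1) = e by rewrite /y divfK // gt_eqF // ltr_wpDl.
have : `|S (maxn N n0)| <= y by exact: ltW.
move: (normr_ge0 (S (maxn N n0))) => ? ?; nra.
Qed.
End DeBound.
Lemma theta_shift (R : realType) (S : topologicalType) (a : int -> S -> int) (s : S)
    (k : int) (x l : R) :
  (forall n, n < k -> a n s = 0) ->
  (fun N : nat => \sum_(i < N) (a (k + i%:Z) s)%:~R * x ^ (k + i%:Z)) @ \oo --> l ->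
  theta x a s = l.
Proof.
move=> a0 hu; rewrite /theta; apply: cvg_lim; first exact: Rhausdorff.
set u := fun N : nat => \sum_(i < N) (a (k + i%:Z) s)%:~R * x ^ (k + i%:Z).
have eqT : forall N : nat, `|k| <= N%:Z ->
    \sum_(i < (2 * N).+1) (a (i%:Z - N%:Z) s)%:~R * x ^ (i%:Z - N%:Z)
    = u (absz (N%:Z - k)%R).+1.
  move=> N hN.
  have -> : (2 * N).+1 = (absz (N%:Z + k)%R + (absz (N%:Z - k)%R).+1)%N by lia.
  rewrite big_split_ord /= big1 ?add0r.
    apply: eq_bigr => j _.
    have -> : ((absz (N%:Z + k)%R + j)%N%:Z - N%:Z) = k + j%:Z by lia.
    by [].
  move=> i _; rewrite a0 ?mul0r //.
  have := ltn_ord i; lia.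
apply/cvgrPdist_lt => e e0.
case: ((cvgrPdist_lt u l).1 hu e e0) => n0 _ H.
exists (n0 + absz k)%N => // N /= hN.
rewrite eqT; last by lia.
apply: H => /=; lia.
Qed.
Section Misc.
Variable R : realType.
Variable x : R.

Lemma nrm_Ww L (rho : R) : 0 <= rho < 1 -> nrm L rho (Ww x) <= Kb rho.
Proof.
move=> rr.
have -> : nrm L rho (Ww x) = nrm L rho (Qn x L).
  by rewrite /nrm; apply: eq_bigr => i _; rewrite /Ww Qn_stab // ltnW.
exact: le_trans (nrm_Qn _ _ _ _ _ rr) (prod_fac _ _ _ rr).
Qed.

Lemma nrm_Ff L (rho : R) : 0 <= rho < 1 ->
  nrm L rho (Ff x) <= (1 + `|x^-1| * rho) * Kb rho.
Proof.
move=> /[dup] rr /andP[r0 r1]; rewrite Ff_Me /Me.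
apply: (le_trans (nrm_Mop _ _ _ _ _ _ r0)); rewrite normrN expr1.
apply: ler_wpM2l; first by rewrite addr_ge0 ?mulr_ge0.
exact: nrm_Ww.
Qed.

Lemma An_agree n G G' : agree n G G' -> forall j, agree n (An x j G) (An x j G').
Proof.
move=> e; elim=> [|j IH] /=; first exact: agree_Dop.
exact: agree_Dop.
Qed.

Lemma Hh_agree n G G' : agree n G G' -> Hh x G n = Hh x G' n.
Proof. by move=> e; rewrite /Hh (An_agree n G G' e n). Qed.

Lemma telesc (Z : nat -> R) N : x != 0 ->
  \sum_(i < N.+1) Me x Z i * x ^+ i = Z N * x ^+ N.
Proof.
move=> x0; elim: N => [|N IH].
  by rewrite big_ord1 /Me /Mop /= addr0 expr0.
rewrite big_ord_recr /= IH /Me /Mop /= subn1 /=.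
by rewrite exprS; field.
Qed.

Lemma nrm_Hh N (rho : R) G : 0 <= rho < 1 ->
  nrm N rho (Hh x G) <= Kb rho * nrm N rho (Dop (- x^-1) 1 G).
Proof.
move=> /[dup] rr /andP[r0 r1].
have -> : nrm N rho (Hh x G) = nrm N rho (An x N G).
  by rewrite /nrm; apply: eq_bigr => i _; rewrite /Hh An_stab // ltnW.
apply: (le_trans (nrm_An _ _ _ _ _ _ rr)); apply: ler_wpM2r.
  by apply: nrm_ge0.
exact: prod_fac.
Qed.
End Misc.

Lemma near_all_le (T : topologicalType) (s : T) (P : nat -> T -> Prop) :
  (forall i, \forall t \near s, P i t) ->
  forall m, \forall t \near s, forall i, (i <= m)%N -> P i t.
Proof.
move=> H; elim=> [|m IH].
  by apply: filterS (H 0%N) => t h i; rewrite leqn0 => /eqP ->.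
apply: filterS2 IH (H m.+1) => t h1 h2 i.
by rewrite leq_eqVlt => /orP[/eqP -> //|]; rewrite ltnS; apply: h1.
Qed.

Definition zsum (F : int -> int) (lo : int) (L : nat) := \sum_(j < L) F (lo + j%:Z).

Lemma zsum_window F lo L lo' L' : lo <= lo' -> lo' + L'%:Z <= lo + L%:Z ->
  (forall a, a < lo' \/ lo' + L'%:Z <= a -> F a = 0) ->
  zsum F lo L = zsum F lo' L'.
Proof.
move=> h1 h2 h0; rewrite /zsum.
have -> : L = (absz (lo' - lo)%R + (L' + absz (lo + L%:Z - lo' - L'%:Z)%R))%N by lia.
rewrite big_split_ord big1 ?add0r; last by move=> j _ /=; apply: h0; left; have := ltn_ord j; lia.
rewrite big_split_ord /= ?add0r ?Monoid.mul1m.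
rewrite [X in X + _ = _](_ : _ = \sum_(j < L') F (lo' + j%:Z)); last first.
  by apply: eq_bigr => j _; congr F; lia.
rewrite [X in _ + X = _]big1 ?addr0 //.
move=> j _; apply: h0; right; lia.
Qed.
Lemma zsum_core F lo L lo' hi' : lo <= lo' -> hi' < lo + L%:Z ->
  (forall a, a < lo' \/ hi' < a -> F a = 0) ->
  zsum F lo L = if lo' <= hi' then zsum F lo' (absz (hi' - lo' + 1)) else 0.
Proof.
move=> h1 h2 h0; case: ifP => hh.
  apply: zsum_window => //; first lia.
  move=> a [ha|ha]; apply: h0; [left => //| right; lia].
rewrite (@zsum_window F lo L lo 0%N) //; first by rewrite /zsum big_ord0.
- by rewrite addr0 lerDl.
- move=> a _; apply: h0; case: (ltP a lo') => ha; [by left | right; lia].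
Qed.

Lemma nrm_shift (R : realType) (S : topologicalType) (a : int -> S -> int) (k : int) (c r : R) (s : S) :
  0 < r ->
  (forall N, \sum_(i < N) ((`|a (k + i%:Z) s|)%:~R * r ^ (k + i%:Z)) <= c) ->
  forall M, nrm M r (fun i => (a (k + i%:Z) s)%:~R) <= c / r ^ k.
Proof.
move=> r0 hc M.
have rk : 0 < r ^ k by rewrite exprz_gt0.
rewrite ler_pdivlMr //; apply: le_trans (hc M); rewrite /nrm mulr_suml.
rewrite le_eqVlt; apply/orP; left; apply/eqP; apply: eq_bigr => i _.
rewrite intr_norm expfzDr ?gt_eqF //; have -> : r ^ (i%:Z) = r ^+ i by [].
by rewrite mulrAC mulrA.
Qed.

Lemma nrm_le_rho (R : realType) L (r1 r2 : R) (a : nat -> R) : 0 <= r1 -> r1 <= r2 ->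
  nrm L r1 a <= nrm L r2 a.
Proof.
move=> h1 h2; rewrite /nrm; apply: ler_sum => i _; apply: ler_wpM2l => //.
by apply: lerXn2r; rewrite ?nnegrE // (le_trans h1 h2).
Qed.
Theorem mainTheorem15 (R : realType) (r r' : R) :
  0 < r' -> r' < r -> r < 1 ->
  exists f : int -> int, ZLgt r f /\
    forall S : topologicalType,
      compact [set: S] -> hausdorff_space S -> extremally_disconnected S ->
      forall g : int -> S -> int, ZLr r g ->
        ((forall s : S, theta r' g s = 0) <->
         exists h : int -> S -> int, ZLr r h /\ is_laurent_prod f h g).
Proof.
move=> x0 xr r1.
have r0 : 0 < r by exact: lt_trans xr.
have xn0 : r' != 0 by rewrite gt_eqF.
have xin : 0 <= r' < 1 by rewrite (ltW x0) (lt_trans xr r1).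
pose f := fun n : int => if n < 0 then 0 else Num.floor (Ff r' (absz n)).
have f_val : forall i : nat, (f i%:Z)%:~R = Ff r' i :> R.
  by move=> i; rewrite /f /= floorK // Ff_int.
have f_neg : forall n, n < 0 -> f n = 0 by move=> n h; rewrite /f h.
exists f; split.
  split; first by exists 0.
  exists ((1 + r) / 2); split; first lra.
  have r2in : 0 <= (1 + r) / 2 < 1 by apply/andP; split; lra.
  apply: (@bnd_to0 R _ ((1 + `|r'^-1| * ((1 + r) / 2)) * Kb ((1 + r) / 2))) => L.
  apply: le_trans (nrm_Ff _ _ L _ r2in); rewrite /nrm; apply: ler_sum => i _.
  have -> : ((1 + r) / 2) ^ (i%:Z) = ((1 + r) / 2) ^+ i by [].
  rewrite intr_norm f_val normrM normr_id ger0_norm // exprn_ge0 //; lra.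
move=> S _ _ _ g [gl [k [gk0 [c gc]]]].
split.
  move=> th.
  pose G := fun s i => ((g (k + i%:Z) s)%:~R : R).
  have Gnrm : forall s M, nrm M r (G s) <= c / r ^ k.
    by move=> s; apply: nrm_shift => // N; exact: gc.
  have Scvg : forall s, cvgn (series (fun i => G s i * r' ^+ i)).
    move=> s; apply: (@bnd_cvg R _ (c / r ^ k)) => L.
    apply: le_trans (Gnrm s L); rewrite /nrm; apply: ler_sum => i _.
    rewrite normrM (ger0_norm (exprn_ge0 i (ltW x0))).
    apply: ler_wpM2l => //; apply: lerXn2r; rewrite ?nnegrE ?(ltW x0) ?(ltW r0) //.
    exact: ltW.
  have S0 : forall s, (fun M => \sum_(i < M) G s i * r' ^+ i) @ \oo --> 0.
    move=> s; have hl := Scvg s.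
    set l := limn (series (fun i => G s i * r' ^+ i)) in hl.
    have hu : (fun N : nat => \sum_(i < N) (g (k + i%:Z) s)%:~R * r' ^ (k + i%:Z))
        @ \oo --> r' ^ k * l.
      have -> : (fun N : nat => \sum_(i < N) (g (k + i%:Z) s)%:~R * r' ^ (k + i%:Z))
          = (fun N => r' ^ k * series (fun i => G s i * r' ^+ i) N).
        apply: funext => N; rewrite seriesEord /= mulr_sumr; apply: eq_bigr => i _.
        by rewrite expfzDr // /G; have -> : r' ^ (i%:Z) = r' ^+ i by []; ring.
      exact: cvgMl_tmp.
    have := @theta_shift R S g s k r' _ (fun n hn => gk0 n s hn) hu; rewrite th => /esym/eqP.
    rewrite mulf_eq0 expfz_eq0 (negbTE xn0) andbF /= => /eqP l0.
    have -> : (fun M => \sum_(i < M) G s i * r' ^+ i) = series (fun i => G s i * r' ^+ i).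
      by rewrite seriesEord.
    by rewrite -l0; exact: hl.
  have Gint : forall s i, G s i \is a Num.int by move=> s i; exact: intr_int.
  pose h := fun n s => if n < k then 0 else Num.floor (Hh r' (G s) (absz (n - k))).
  have h_val : forall s (i : nat), (h (k + i%:Z) s)%:~R = Hh r' (G s) i.
    move=> s i; rewrite /h.
    have -> : (k + i%:Z < k) = false by apply/negbTE; rewrite -leNgt; lia.
    have -> : absz (k + i%:Z - k)%R = i by lia.
    by rewrite floorK // Hh_int.
  exists h; split.
    split.
      move=> n s; rewrite /h; case: ifP => hn; first by apply: filterE.
      have := @near_all_le S s (fun i t => g (k + i%:Z) t = g (k + i%:Z) s)
        (fun i => gl (k + i%:Z) s) (absz (n - k)%R).
      apply: filterS => t ht; congr Num.floor; apply: Hh_agree => i hi.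
      by rewrite /G ht.
    exists k; split; first by move=> n t hn; rewrite /h hn.
    exists (r ^ k * (Kb r * (r' / (r - r') * (c / r ^ k)))) => s N.
    have rk : 0 < r ^ k by rewrite exprz_gt0.
    have -> : \sum_(i < N) (`|h (k + i%:Z) s|)%:~R * r ^ (k + i%:Z)
        = r ^ k * nrm N r (Hh r' (G s)).
      rewrite /nrm mulr_sumr; apply: eq_bigr => i _.
      rewrite intr_norm h_val expfzDr ?gt_eqF //.
      by have -> : r ^ (i%:Z) = r ^+ i by []; ring.
    apply: ler_wpM2l; first exact: ltW.
    have rin : 0 <= r < 1 by rewrite (ltW r0) r1.
    apply: (le_trans (nrm_Hh _ _ _ _ _ rin)); apply: ler_wpM2l.
      by rewrite /Kb expR_ge0.
    exact: (@De_bound R r' r x0 xr (G s) _ (Gnrm s) (S0 s) N).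
  exists 0, k; split; first exact: f_neg.
  split; first by move=> n t hn; rewrite /h hn.
  move=> n s; rewrite add0r; case: ifP => hn; first by apply: gk0.
  apply: (@intr_inj R); rewrite rmorph_sum /=.
  have hnm : n = k + (absz (n - k))%:Z by lia.
  rewrite [in LHS]hnm -[LHS]/(G s (absz (n - k)%R)).
  have := conv_FH R r' (G s) (absz (n - k)%R); rewrite /cprod => <-.
  apply: eq_bigr => j _; rewrite intrM add0r f_val.
  have -> : n - 0 - j%:Z = k + (absz (n - k) - j)%N%:Z.
    have := ltn_ord j; lia.
  by rewrite h_val.
move=> [h [[hl [k2 [hk2 [c2 hc2]]]] [kf [kh [hf [hh hg]]]]]] s.
have canon : forall n, g n s = if n < k2 then 0
    else zsum (fun a => f a * h (n - a) s) 0 (absz (n - k2)%R).+1.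
  move=> n; rewrite hg.
  set F := fun a => f a * h (n - a) s.
  have F0 : forall a, a < Num.max 0 kf \/ n - Num.max kh k2 < a -> F a = 0.
    move=> a [ha|ha]; rewrite /F.
      case: (ltP a 0) => a0; first by rewrite f_neg // mul0r.
      by rewrite hf ?mul0r //; lia.
    case: (ltP (n - a) kh) => h1; first by rewrite hh ?mulr0.
    by rewrite hk2 ?mulr0 //; lia.
  have eL : \sum_(j < (absz (n - (kf + kh))%R).+1) f (kf + j%:Z) * h (n - kf - j%:Z) s
      = zsum F kf (absz (n - (kf + kh))%R).+1.
    by rewrite /zsum; apply: eq_bigr => j _; rewrite /F; congr (_ * h _ s); lia.
  rewrite eL.
  rewrite (@zsum_core F kf _ (Num.max 0 kf) (n - Num.max kh k2)) //; [|lia|lia].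
  rewrite (@zsum_core F 0 _ (Num.max 0 kf) (n - Num.max kh k2)) //; [|lia|lia].
  case: ifP => h1; case: ifP => h2 //; case: ifP => h3 //; lia.
pose H' := fun i : nat => ((h (k2 + i%:Z) s)%:~R : R).
have Hn : forall M, nrm M r H' <= c2 / r ^ k2.
  by move=> M; apply: nrm_shift => // N; exact: hc2.
have GH : forall m : nat, ((g (k2 + m%:Z) s)%:~R : R) = cprod (Ff r') H' m.
  move=> m; rewrite canon.
  have -> : (k2 + m%:Z < k2) = false by apply/negbTE; rewrite -leNgt; lia.
  have -> : absz (k2 + m%:Z - k2)%R = m by lia.
  rewrite /zsum rmorph_sum /cprod; apply: eq_bigr => j _ /=.
  rewrite add0r intrM f_val /H'.
  have -> : k2 + m%:Z - j%:Z = k2 + (m - j)%N%:Z by have := ltn_ord j; lia.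
  by [].
pose Z := cprod (Ww r') H'.
have FZ : cprod (Ff r') H' = Me r' Z by rewrite Ff_Me /Me conv_Mop.
have Zto0 : (fun N => Z N * r' ^+ N) @ \oo --> 0.
  apply: (@bnd_to0 R _ (Kb r' * (c2 / r ^ k2))) => L.
  have -> : \sum_(i < L) `|Z i * r' ^+ i| = nrm L r' Z.
    by apply: eq_bigr => i _; rewrite normrM (ger0_norm (exprn_ge0 i (ltW x0))).
  apply: (le_trans (nrm_conv _ _ _ _ _ (ltW x0))).
  apply: ler_pM; [exact: nrm_ge0 (ltW x0) | exact: nrm_ge0 (ltW x0) | exact: nrm_Ww |].
  apply: le_trans (Hn L); apply: nrm_le_rho; [exact: ltW | exact: ltW].
have Sp0 : (fun N => \sum_(i < N) Me r' Z i * r' ^+ i) @ \oo --> 0.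
  rewrite -cvg_shiftS.
  have -> : [sequence (fun N => \sum_(i < N) Me r' Z i * r' ^+ i) n.+1]_n
      = (fun N => Z N * r' ^+ N).
    by apply: funext => N /=; rewrite telesc.
  exact: Zto0.
have hu : (fun N : nat => \sum_(i < N) (g (k2 + i%:Z) s)%:~R * r' ^ (k2 + i%:Z))
    @ \oo --> 0.
  have -> : (fun N : nat => \sum_(i < N) (g (k2 + i%:Z) s)%:~R * r' ^ (k2 + i%:Z))
      = (fun N => r' ^ k2 * \sum_(i < N) Me r' Z i * r' ^+ i).
    apply: funext => N; rewrite mulr_sumr; apply: eq_bigr => i _.
    rewrite GH FZ expfzDr //; have -> : r' ^ (i%:Z) = r' ^+ i by [].
    ring.
  have h0 := cvgMl_tmp (a := r' ^ k2) Sp0; rewrite mulr0 in h0; exact: h0.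
apply: (@theta_shift R S g s k2 r' 0) => // n hn.
by rewrite canon hn.
Qed.
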